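(* Let $q$ be a prime power and $t\ge 1$ an integer. In a projective space over $\mathbb{F}_q$, let $\Omega$ be a $(t-2)$-dimensional subspace, $\Gamma$ a plane skew from $\Omega$, $\Pi=\langle\Omega,\Gamma\rangle$, $\bar{B}$ a small minimal blocking set of $\Gamma$, and $K$ the cone with vertex $\Omega$ and base $\bar{B}$. Then every plane $\pi$ of $\Pi$ meets $K$ either in the whole plane $\pi$, or in a union of lines through a fixed point, or in a minimal blocking set of $\pi$ that is projectively equivalent to $\bar{B}$.
   Context: The cone with vertex $\Omega$ and base $\bar{B}$ is $\bigcup_{P\in\bar B}\langle P,\Omega\rangle$. A blocking set of a plane over $\mathbb{F}_q$ is a point set meeting every line; minimal means no proper subset does; small means fewer than $3(q+1)/2$ points. *)

(* Defs.v *)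
(* Projective geometry over a finite field F (= F_q, q = #|F|)
   modelled inside the vector space F^n (row vectors):
   a projective subspace of projective dimension d is the row space of a square
   matrix A : 'M[F]_n with \rank A = d+1; incidence is row-space inclusion
   (A <= B)%MS; the span <A,B> is (A + B)%MS.  Points are represented
   canonically by the rank-1 matrices A with <<A>> = A, so that point sets are
   finite sets {set 'M[F]_n}. *)
From HB Require Import structures.
From mathcomp Require Import all_boot all_order all_algebra.

Set Implicit Arguments.
Unset Strict Implicit.
Unset Printing Implicit Defensive.

Import GRing.Theory.
Local Open Scope ring_scope.

Section ProjGeom.
Variables (F : finFieldType) (n : nat).

Definition points : {set 'M[F]_n} :=
  [set A : 'M[F]_n | (<<A>>%MS == A) && (\rank A == 1%N)].

Definition pts_of (S : 'M[F]_n) : {set 'M[F]_n} :=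
  [set P in points | (P <= S)%MS].

Definition blocking_set (G : 'M[F]_n) (B : {set 'M[F]_n}) : Prop :=
  B \subset pts_of G /\
  (forall L : 'M[F]_n, \rank L = 2%N -> (L <= G)%MS ->
     exists2 P, P \in B & (P <= L)%MS).

Definition minimal_blocking_set (G : 'M[F]_n) (B : {set 'M[F]_n}) : Prop :=
  blocking_set G B /\ (forall B' : {set 'M[F]_n}, B' \proper B -> ~ blocking_set G B').

Definition small_set (B : {set 'M[F]_n}) : Prop :=
  (2 * #|B| < 3 * (#|F| + 1))%N.

Definition cone (Om : 'M[F]_n) (B : {set 'M[F]_n}) : {set 'M[F]_n} :=
  [set P in points | [exists Pb in B, (P <= Om + Pb)%MS]].

Definition union_of_lines_through_point (pi : 'M[F]_n) (X : {set 'M[F]_n}) : Prop :=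
  exists2 R, R \in pts_of pi &
  exists Ls : {set 'M[F]_n},
    [/\ Ls != set0,
        (forall l, l \in Ls -> [/\ \rank l = 2%N, (l <= pi)%MS & (R <= l)%MS]) &
        X = [set P in points | [exists l in Ls, (P <= l)%MS]]].

Definition proj_equiv (X Y : {set 'M[F]_n}) : Prop :=
  exists2 M : 'M[F]_n, M \in unitmx & Y = [set <<P *m M>>%MS | P in X].

End ProjGeom.

(* Main.v *)
From HB Require Import structures.
Require Import Defs.
From mathcomp Require Import all_boot all_order all_algebra.
From mathcomp Require Import zify.
Set Implicit Arguments. Unset Strict Implicit. Unset Printing Implicit Defensive.
Import GRing.Theory.
Local Open Scope ring_scope.

Lemma ext_unit (F : fieldType) r n (A B : 'M[F]_(r, n)) :
  row_free A -> row_free B -> exists2 M, M \in unitmx & A *m M = B.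
Proof.
move=> fA fB.
have rA : \rank A = r by apply/eqP.
have rB : \rank B = r by apply/eqP.
have rn : (r <= n)%N by rewrite -rA rank_leq_col.
set E : 'M[F]_(r, n) := pid_mx r.
have EEt : E *m E^T = 1%:M.
  by rewrite /E tr_pid_mx mul_pid_mx minnn (minn_idPr rn) pid_mx_1.
have eA : col_ebase A *m E *m row_ebase A = A by move: (mulmx_ebase A); rewrite rA.
have eB : col_ebase B *m E *m row_ebase B = B by move: (mulmx_ebase B); rewrite rB.
pose f (Z : 'M[F]_r) : 'M[F]_n := E^T *m Z *m E.
have fD Z1 Z2 : f (Z1 + Z2) = f Z1 + f Z2 by rewrite /f mulmxDr mulmxDl.
pose Q (K : 'M[F]_r) : 'M[F]_n := 1%:M + f (K - 1%:M).
have EQ K : E *m Q K = K *m E.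
  rewrite /Q /f mulmxDr mulmx1 !mulmxA EEt mul1mx mulmxBl mul1mx.
  by rewrite addrC subrK.
have QQ K K' : Q K *m Q K' = Q (K *m K').
  rewrite /Q mulmxDr mulmx1 mulmxDl mul1mx.
  have -> : f (K - 1%:M) *m f (K' - 1%:M) = f ((K - 1%:M) *m (K' - 1%:M)).
    by rewrite /f !mulmxA -[E^T *m (K - 1%:M) *m E *m E^T]mulmxA EEt mulmx1.
  rewrite -!addrA; congr (_ + _); rewrite !addrA -!fD; congr (f _).
  rewrite mulmxBr mulmx1 mulmxBl mul1mx.
  by rewrite addrC subrKA subrKA.
set L := col_ebase A; set L' := col_ebase B.
have Q1 : Q 1%:M = 1%:M by rewrite /Q /f subrr mulmx0 mul0mx addr0.
have uQ : Q (invmx L *m L') \in unitmx.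
  have := QQ (invmx L *m L') (invmx L' *m L).
  rewrite mulmxA -[invmx L *m L' *m invmx L']mulmxA mulmxV ?col_ebase_unit //.
  rewrite mulmx1 mulVmx ?col_ebase_unit // Q1.
  by case/mulmx1_unit.
exists (invmx (row_ebase A) *m Q (invmx L *m L') *m row_ebase B).
  by rewrite !unitmx_mul unitmx_inv row_ebase_unit uQ row_ebase_unit.
rewrite -{1}eA -[RHS]eB !mulmxA mulmxK ?row_ebase_unit //.
by rewrite -[L *m E *m _]mulmxA EQ mulmxA mulKVmx ?col_ebase_unit.
Qed.

Section Help.
Variables (F : finFieldType) (n : nat).
Implicit Types (P R S : 'M[F]_n).

Lemma pt_spec P : P \in points F n -> <<P>>%MS = P /\ \rank P = 1%N.
Proof. by rewrite inE => /andP[/eqP -> /eqP ->]. Qed.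

Lemma pt_gen m (v : 'M[F]_(m, n)) : \rank v = 1%N -> <<v>>%MS \in points F n.
Proof. by move=> rv; rewrite inE genmx_id eqxx mxrank_gen rv. Qed.

Lemma pt_eq P R : P \in points F n -> R \in points F n -> (P <= R)%MS -> P = R.
Proof.
move=> /pt_spec[gP rP] /pt_spec[gR rR] sPR.
have sRP : (R <= P)%MS.
  by have [_ <-] := mxrank_leqif_sup sPR; rewrite rP rR.
by rewrite -gP -gR; apply/genmxP; rewrite sPR sRP.
Qed.

Lemma exists_pt m1 m2 (S : 'M[F]_(m1, n)) (R : 'M[F]_(m2, n)) : ~~ (S <= R)%MS ->
  exists P, [/\ P \in points F n, (P <= S)%MS & ~~ (P <= R)%MS].
Proof.
case/row_subPn => i Hi.
have nz : row i S != 0.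
  by apply: contra Hi => /eqP ->; rewrite sub0mx.
have rv : \rank (row i S) = 1%N.
  apply/eqP; rewrite eqn_leq rank_leq_row lt0n mxrank_eq0 nz //.
exists <<row i S>>%MS; split; first exact: pt_gen.
  by rewrite genmxE row_sub.
by rewrite genmxE.
Qed.

Lemma rank_two P R : P \in points F n -> R \in points F n -> ~~ (P <= R)%MS ->
  \rank (R + P)%MS = 2%N.
Proof.
move=> /pt_spec[_ rP] /pt_spec[_ rR] nPR.
have [le _] := mxrank_adds_leqif R P.
have [le2 eq2] := mxrank_leqif_sup (addsmxSl R P).
have : \rank R != \rank (R + P)%MS.
  by rewrite eq2 addsmx_sub submx_refl.
move: le le2; rewrite rP rR; lia.
Qed.

Lemma exists_line m (S : 'M[F]_(m, n)) : (2 <= \rank S)%N ->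
  exists L : 'M[F]_n, \rank L = 2%N /\ (L <= S)%MS.
Proof.
move=> r2.
have [P1 [p1 s1 _]] : exists P, [/\ P \in points F n, (P <= S)%MS & ~~ (P <= (0 : 'M[F]_n))%MS].
  apply: exists_pt; rewrite submx0 -mxrank_eq0; lia.
have [P2 [p2 s2 n2]] : exists P, [/\ P \in points F n, (P <= S)%MS & ~~ (P <= P1)%MS].
  apply: exists_pt; apply/negP => /mxrankS; have [_ ->] := pt_spec p1; lia.
exists (P1 + P2)%MS; split; first exact: rank_two.
by rewrite addsmx_sub s1 s2.
Qed.

Lemma gen_mul m p (A : 'M[F]_(m, n)) (M : 'M[F]_(n, p)) :
  <<<<A>>%MS *m M>>%MS = <<A *m M>>%MS.
Proof. by apply: eq_genmx; apply: eqmxMr; apply: genmxE. Qed.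

Definition img (M : 'M[F]_n) (B : {set 'M[F]_n}) := [set <<P *m M>>%MS | P in B].

Lemma img_img (M N : 'M[F]_n) (B : {set 'M[F]_n}) :
  M *m N = 1%:M -> B \subset points F n -> img N (img M B) = B.
Proof.
move=> MN /subsetP sB; apply/setP => x; apply/imsetP/idP.
  case=> y /imsetP[P PB ->] ->.
  by rewrite gen_mul -mulmxA MN mulmx1; have [-> _] := pt_spec (sB _ PB).
move=> xB; exists <<x *m M>>%MS; first exact: imset_f.
by rewrite gen_mul -mulmxA MN mulmx1; have [-> _] := pt_spec (sB _ xB).
Qed.

Lemma blk_map (M G H : 'M[F]_n) B : M \in unitmx -> (G *m M == H)%MS ->
  blocking_set G B -> blocking_set H (img M B).
Proof.
move=> uM /andP[GH HG] [sB blk]; split.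
  apply/subsetP => x /imsetP[P PB ->].
  move: (subsetP sB _ PB); rewrite !inE => /andP[pP PG].
  case/andP: pP => _ /eqP rP.
  by rewrite genmx_id eqxx mxrank_gen mxrankMfree ?row_free_unit // rP genmxE (submx_trans (submxMr M PG) GH).
move=> L rL LH.
have := blk (L *m invmx M).
rewrite mxrankMfree ?row_free_unit ?unitmx_inv // rL.
have LG : (L *m invmx M <= G)%MS.
  by rewrite -[G](mulmxK uM) submxMr // (submx_trans LH HG).
case=> // P PB PL; exists <<P *m M>>%MS; first exact: imset_f.
by rewrite genmxE -[L](mulmxKV uM) submxMr.
Qed.

Lemma min_map (M G H : 'M[F]_n) B : M \in unitmx -> (G *m M == H)%MS ->
  minimal_blocking_set G B -> minimal_blocking_set H (img M B).
Proof.
move=> uM GMH [bB mB]; split; first exact: blk_map bB.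
move=> B' pB' bB'.
have HG : (H *m invmx M == G)%MS.
  case/andP: GMH => GH HG; apply/andP; split.
    by rewrite -[G](mulmxK uM) submxMr.
  by rewrite -[G](mulmxK uM) submxMr.
have sBp : B \subset points F n.
  by apply/subsetP => x /(subsetP bB.1); rewrite inE => /andP[].
have sB'p : B' \subset points F n.
  case/andP: pB' => s _; apply/subsetP => x /(subsetP s).
  by move/(subsetP (blk_map uM GMH bB).1); rewrite inE => /andP[].
apply: (mB (img (invmx M) B')); last first.
  by apply: blk_map bB'; rewrite ?unitmx_inv.
case/andP: pB' => s ns; rewrite properE.
rewrite -{1}(img_img (mulmxV uM) sBp) imsetS //=.
apply: contra ns => sub.
rewrite -(img_img (mulVmx uM) sB'p); exact: imsetS.
Qed.

End Help.

Theorem lemma5p8 (F : finFieldType) (n t : nat) (Om Ga : 'M[F]_n)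
    (Bb : {set 'M[F]_n}) :
  (1 <= t)%N ->
  \rank Om = t.-1 ->                       (* Om is (t-2)-dimensional *)
  \rank Ga = 3%N ->                        (* Ga is a plane *)
  \rank (Om :&: Ga)%MS = 0%N ->            (* Ga skew from Om *)
  minimal_blocking_set Ga Bb -> small_set Bb ->
  forall pi : 'M[F]_n, \rank pi = 3%N -> (pi <= Om + Ga)%MS ->
    let X := cone Om Bb :&: pts_of pi in
    X = pts_of pi \/
    union_of_lines_through_point pi X \/
    (minimal_blocking_set pi X /\ proj_equiv Bb X).
Proof.
move=> _ _ rGa dOG minB _ pi rpi spi X.
set o := \rank Om.
have OG0 : (Om :&: Ga = 0)%MS by apply/eqP; rewrite -mxrank_eq0 dOG.
have GO0 : (Ga :&: Om = 0)%MS by rewrite capmxC.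
have BsubG : forall Pb, Pb \in Bb -> Pb \in points F n /\ (Pb <= Ga)%MS.
  move=> Pb /(subsetP minB.1.1); rewrite /pts_of in_set => /andP[-> ->]; done.
have [k0|k1] := eqVneq (\rank (pi :&: Om)%MS) 0%N.
- right; right.
  pose p := proj_mx Ga Om.
  have [A [fA eA]] : exists A : 'M[F]_(\rank pi, n), row_free A /\ (A :=: pi)%MS.
    by exists (row_base pi); split; [exact: row_base_free | exact: eq_row_base].
  have key0 m (W : 'M[F]_(m, n)) : (W <= pi)%MS -> W *m p = 0 -> W = 0.
    move=> Wpi Wp0; apply/eqP; rewrite -mxrank_eq0 -leqn0 -k0 mxrankS //.
    rewrite sub_capmx Wpi /=.
    have := @proj_mx_compl_sub _ _ _ Ga Om W; rewrite Wp0 subr0; apply.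
    by rewrite addsmxC; exact: submx_trans Wpi spi.
  have rfree : row_free (A *m p).
    have c0 : \rank (A :&: kermx p)%MS = 0%N.
      apply/eqP; rewrite mxrank_eq0; apply/eqP; apply: key0.
        by apply: submx_trans (capmxSl _ _) _; rewrite eA.
      by apply/sub_kermxP; rewrite capmxSr.
    by rewrite /row_free; have := mxrank_mul_ker A p; rewrite c0 addn0 => ->; rewrite eA.
  have [M0 uM0 AM0] := ext_unit fA rfree.
  have keyM m (v : 'M[F]_(m, n)) : (v <= pi)%MS -> v *m M0 = v *m p.
    move=> vpi; have : (v <= A)%MS by rewrite eA.
    by case/submxP => D ->; rewrite -!mulmxA AM0.
  pose M := invmx M0.
  have uM : M \in unitmx by rewrite unitmx_inv.
  have rpiM0 : \rank (pi *m M0) = 3%N by rewrite mxrankMfree ?row_free_unit.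
  have GapiM0 : (Ga <= pi *m M0)%MS.
    have h : (pi *m M0 <= Ga)%MS by rewrite keyM // proj_mx_sub.
    by have [_ <-] := mxrank_leqif_sup h; rewrite rpiM0 rGa.
  have GM1 : (Ga *m M <= pi)%MS.
    by rewrite -[pi](mulmxK uM0) submxMr.
  have GM2 : (pi <= Ga *m M)%MS.
    have [_ <-] := mxrank_leqif_sup GM1.
    by rewrite mxrankMfree ?row_free_unit // rGa rpi.
  have GaMpi : (Ga *m M == pi)%MS by rewrite GM1 GM2.
  have charac P : P \in points F n -> (P <= pi)%MS ->
      (P \in cone Om Bb) = (<<P *m M0>>%MS \in Bb).
    move=> pP Ppi; have [gP rP] := pt_spec pP.
    rewrite /cone in_set pP /=; apply/exists_inP/idP.
      case=> Pb PbB sP; have [pPb PbG] := BsubG _ PbB.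
      suff -> : <<P *m M0>>%MS = Pb by [].
      apply: pt_eq => //; first by apply: pt_gen; rewrite mxrankMfree ?row_free_unit.
      rewrite genmxE keyM //; apply: submx_trans (submxMr p sP) _.
      by rewrite addsmxMr (proj_mx_0 GO0 (submx_refl Om)) (proj_mx_id GO0 PbG) adds0mx.
    move=> PbB; exists <<P *m M0>>%MS => //.
    rewrite -[X in (X <= _)%MS](subrK (P *m p)); apply: addmx_sub_adds.
      by apply: proj_mx_compl_sub; rewrite addsmxC; exact: submx_trans Ppi spi.
    by rewrite genmxE keyM.
  have eX : X = img M Bb.
    apply/setP => x; rewrite /X in_setI; apply/andP/imsetP.
      case=> xc; rewrite /pts_of in_set => /andP[px xpi].
      rewrite (charac x px xpi) in xc; exists <<x *m M0>>%MS => //.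
      by rewrite gen_mul -mulmxA mulmxV // mulmx1; have [-> _] := pt_spec px.
    case=> Pb PbB ->; have [pPb PbG] := BsubG _ PbB; have [_ rPb] := pt_spec pPb.
    have pt : <<Pb *m M>>%MS \in points F n.
      by apply: pt_gen; rewrite mxrankMfree ?row_free_unit.
    have sub : (<<Pb *m M>>%MS <= pi)%MS.
      by rewrite genmxE; apply: submx_trans (submxMr M PbG) GM1.
    split; last by rewrite /pts_of in_set pt sub.
    rewrite charac // gen_mul mulmxKV //; by have [-> _] := pt_spec pPb.
  split; first by rewrite eX; exact: min_map uM GaMpi minB.
  by exists M; last exact: eX.
right; left.
have rOG : \rank (Om + Ga)%MS = (o + 3)%N.
  by have := mxrank_sum_cap Om Ga; rewrite dOG rGa; lia.
have [Pb [PbB rS]] : exists Pb, Pb \in Bb /\ (2 <= \rank (pi :&: (Om + Pb))%MS)%N.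
  have [k2|k1'] := leqP 2 (\rank (pi :&: Om)%MS).
    have [L [rL sL]] : exists L : 'M[F]_n, \rank L = 2%N /\ (L <= Ga)%MS.
      by apply: exists_line; rewrite rGa.
    have [Pb PbB _] := minB.1.2 L rL sL.
    exists Pb; split => //; apply: leq_trans k2 _; apply: mxrankS.
    by rewrite sub_capmx capmxSl /=; apply: submx_trans (capmxSr _ _) (addsmxSl _ _).
  have r1 : \rank (pi :&: Om)%MS = 1%N by lia.
  have rOp : \rank (Om + pi)%MS = (o + 2)%N.
    by have := mxrank_sum_cap Om pi; rewrite capmxC r1 rpi; lia.
  have rOpG : \rank ((Om + pi) + Ga)%MS = (o + 3)%N.
    apply/eqP; rewrite -rOG eqn_leq !mxrankS //.
      by rewrite addsmx_sub addsmxSr (submx_trans (addsmxSl Om pi) (addsmxSl _ Ga)).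
    by rewrite !addsmx_sub addsmxSl spi addsmxSr.
  have rW : \rank ((Om + pi) :&: Ga)%MS = 2%N.
    by have := mxrank_sum_cap (Om + pi)%MS Ga; rewrite rOpG rOp rGa; lia.
  have [Pb PbB PbW] := minB.1.2 _ rW (capmxSr _ _).
  exists Pb; split => //.
  have [pPb PbG] := BsubG _ PbB.
  have [_ rPb] := pt_spec pPb.
  have rOPb : \rank (Om + Pb)%MS = (o + 1)%N.
    have c0 : \rank (Om :&: Pb)%MS = 0%N.
      by apply/eqP; rewrite mxrank_eq0 -submx0 -OG0 capmxS.
    by have := mxrank_sum_cap Om Pb; rewrite c0 rPb; lia.
  have le : (\rank (pi + (Om + Pb))%MS <= o + 2)%N.
    rewrite -rOp mxrankS // !addsmx_sub addsmxSr addsmxSl /=.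
    exact: submx_trans PbW (capmxSl _ _).
  by have := mxrank_sum_cap pi (Om + Pb)%MS; rewrite rpi rOPb; lia.
have [R [pR sR _]] : exists P, [/\ P \in points F n, (P <= pi :&: Om)%MS & ~~ (P <= (0 : 'M[F]_n))%MS].
  by apply: exists_pt; rewrite submx0 -mxrank_eq0.
move: sR; rewrite sub_capmx => /andP[Rpi ROm].
have [Q [pQ sQ nQR]] : exists P, [/\ P \in points F n, (P <= pi :&: (Om + Pb))%MS & ~~ (P <= R)%MS].
  by apply: exists_pt; apply/negP => /mxrankS; have [_ ->] := pt_spec pR; lia.
have memX x : (x \in X) = [&& x \in points F n, [exists Pb0 in Bb, (x <= Om + Pb0)%MS] & (x <= pi)%MS].
  rewrite /X in_setI /cone /pts_of !in_set.
  by case: (<<x>>%MS == x); case: (\rank x == 1%N).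
move: sQ; rewrite sub_capmx => /andP[Qpi QOP].
have QX : Q \in X.
  by rewrite memX pQ Qpi andbT; apply/exists_inP; exists Pb.
have QR : Q != R by apply: contraNneq nQR => ->; exact: submx_refl.
exists R; first by rewrite /pts_of in_set pR Rpi.
exists [set <<(R + P)%MS>>%MS | P in X :\ R].
split.
- apply/set0Pn; exists <<(R + Q)%MS>>%MS; apply: imset_f; by rewrite in_setD1 QR QX.
- move=> l /imsetP[P]; rewrite in_setD1 => /andP[PR]; rewrite memX => /and3P[pP _ Ppi] ->.
  split.
  + rewrite mxrank_gen; apply: rank_two => //; apply: contra PR => s; apply/eqP; exact: pt_eq.
  + by rewrite genmxE addsmx_sub Rpi Ppi.
  + by rewrite genmxE addsmxSl.
- apply/setP => x; rewrite [in RHS]in_set; apply/idP/idP.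
  + move=> xX; have := xX; rewrite memX => /and3P[px _ _]; rewrite px /=.
    apply/exists_inP; case: (eqVneq x R) => [->|xR].
      exists <<(R + Q)%MS>>%MS; first by apply: imset_f; rewrite in_setD1 QR QX.
      by rewrite genmxE addsmxSl.
    exists <<(R + x)%MS>>%MS; first by apply: imset_f; rewrite in_setD1 xR xX.
    by rewrite genmxE addsmxSr.
  + case/andP => px /exists_inP[l /imsetP[P]]; rewrite in_setD1 => /andP[_].
    rewrite (memX P) => /and3P[_ /exists_inP[Pb' Pb'B sP] Ppi] -> xl.
    rewrite genmxE in xl; rewrite memX px /=; apply/andP; split.
      apply/exists_inP; exists Pb' => //; apply: submx_trans xl _.
      by rewrite addsmx_sub sP andbT (submx_trans ROm (addsmxSl _ _)).
    by apply: submx_trans xl _; rewrite addsmx_sub Rpi Ppi.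
Qed.
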